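(* Let $I=(x_1,\ldots,x_n)$ be a list of items with sizes $x_i\in(1/3,1]$, and let $I'=(x'_1,\ldots,x'_n)$ be a list of items with sizes in $(0,1]$ obtained from $I$ by increasing the sizes of one or more items, i.e. $x'_i\ge x_i$ for all $i$. Then $\mathrm{BF}(I)\le \mathrm{BF}(I')$.
   Context: The online algorithm Best Fit (BF) processes a list of items with sizes in $(0,1]$ in the given order and packs the current item into the fullest bin (largest current load, i.e. sum of sizes of items in it) into which it fits without exceeding total size $1$, opening a new unit-capacity bin if it fits into no existing bin; items are never moved. $\mathrm{BF}(I)$ denotes the number of bins Best Fit uses on list $I$. *)

(* Defs.v *)
From Stdlib Require Import Reals Lra List.
Import ListNotations.
Open Scope R_scope.

(* A packing state is the list of current bin loads (sum of item sizes in
   each bin), in the order the bins were opened.  All bins have capacity 1. *)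

(* [best_bin loads x] returns [Some i] where [i] is the index of a bin of
   maximal load among those bins into which [x] fits (load + x <= 1);
   ties are broken in favour of the earliest opened bin. *)
Fixpoint best_bin_aux (loads : list R) (x : R) (k : nat)
    (acc : option (nat * R)) : option (nat * R) :=
  match loads with
  | [] => acc
  | l :: ls =>
      let acc' :=
        if Rle_dec (l + x) 1 then
          match acc with
          | None => Some (k, l)
          | Some (j, lj) => if Rlt_dec lj l then Some (k, l) else acc
          end
        else acc in
      best_bin_aux ls x (S k) acc'
  end.

Definition best_bin (loads : list R) (x : R) : option nat :=
  option_map fst (best_bin_aux loads x 0 None).

Fixpoint add_at (loads : list R) (i : nat) (x : R) : list R :=
  match loads, i with
  | [], _ => []
  | l :: ls, O => (l + x) :: ls
  | l :: ls, S i' => l :: add_at ls i' x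
  end.

Definition bf_step (loads : list R) (x : R) : list R :=
  match best_bin loads x with
  | Some i => add_at loads i x
  | None => loads ++ [x]
  end.

Definition bf_loads (I : list R) : list R := fold_left bf_step I [].

Definition BF (I : list R) : nat := length (bf_loads I).

(* Main.v *)
Require Import Defs.
From Stdlib Require Import Reals Lra Lia List Permutation.
Import ListNotations.
Open Scope R_scope.

Definition cnt (p : R -> bool) (S : list R) : nat := length (filter p S).
Definition ab (t : R) (s : bool) : R -> bool := fun y =>
  if s then (if Rlt_dec t y then true else false)
  else (if Rle_dec t y then true else false).
Definition Q (a : R) : R -> bool := fun y => if Rle_dec (a + y) 1 then true else false.
Definition pw (S : list R) := forall a, In a S ->
  (cnt (Q a) S <= (if Rle_dec (a + a) 1 then 1 else 0))%nat.
Definition dom (S S' : list R) := forall t s, (cnt (ab t s) S <= cnt (ab t s) S')%nat.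

Lemma ab_up t s y z : ab t s y = true -> y <= z -> ab t s z = true.
Proof. unfold ab; destruct s; destruct (Rlt_dec t y); destruct (Rlt_dec t z);
  destruct (Rle_dec t y); destruct (Rle_dec t z); intros; try lra; auto. Qed.
Lemma ab_lt t s y z : ab t s y = false -> ab t s z = true -> y < z.
Proof. unfold ab; destruct s; destruct (Rlt_dec t y); destruct (Rlt_dec t z);
  destruct (Rle_dec t y); destruct (Rle_dec t z); intros; try lra; discriminate. Qed.
Lemma ab_gt_true t y : t < y -> ab t true y = true.
Proof. unfold ab; destruct (Rlt_dec t y); auto; lra. Qed.
Lemma ab_gt_false t y : y <= t -> ab t true y = false.
Proof. unfold ab; destruct (Rlt_dec t y); auto; lra. Qed.
Lemma ab_ge_true t y : t <= y -> ab t false y = true.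
Proof. unfold ab; destruct (Rle_dec t y); auto; lra. Qed.
Lemma Q_true a y : a + y <= 1 -> Q a y = true.
Proof. unfold Q; destruct (Rle_dec (a+y) 1); auto; lra. Qed.
Lemma Q_false a y : 1 < a + y -> Q a y = false.
Proof. unfold Q; destruct (Rle_dec (a+y) 1); auto; lra. Qed.

Lemma cnt_neg p S : (cnt p S + cnt (fun y => negb (p y)) S = length S)%nat.
Proof. induction S as [|a S IH]; unfold cnt in *; simpl; auto.
  destruct (p a); simpl; lia. Qed.
Lemma cnt_mono p q S : (forall y, In y S -> p y = true -> q y = true) ->
  (cnt p S <= cnt q S)%nat.
Proof. induction S as [|a S IH]; unfold cnt in *; simpl; intros H; auto.
  destruct (p a) eqn:Ep.
  - rewrite (H a (or_introl eq_refl) Ep); simpl.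
    assert (IH' := IH (fun y Hy => H y (or_intror Hy))); lia.
  - assert (IH' := IH (fun y Hy => H y (or_intror Hy))).
    destruct (q a); simpl; lia. Qed.
Lemma cnt_strict p q S y : (forall y, In y S -> p y = true -> q y = true) ->
  In y S -> q y = true -> p y = false -> (cnt p S < cnt q S)%nat.
Proof. induction S as [|a S IH]; intros H Hy Hq Hp; [destruct Hy|].
  assert (H' : forall y, In y S -> p y = true -> q y = true) by (intros; apply H; simpl; auto).
  destruct Hy as [<-|Hy].
  - unfold cnt; simpl. rewrite Hp, Hq; simpl. assert (h := cnt_mono p q S H').
    unfold cnt in h; lia.
  - assert (IH' := IH H' Hy Hq Hp). unfold cnt in *; simpl.
    destruct (p a) eqn:Ep.
    + rewrite (H a (or_introl eq_refl) Ep); simpl; lia.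
    + destruct (q a); simpl; lia. Qed.
Lemma cnt_app p S x : cnt p (S ++ [x]) = (cnt p S + (if p x then 1 else 0))%nat.
Proof. unfold cnt; rewrite filter_app, length_app; simpl; destruct (p x); simpl; lia. Qed.
Lemma cnt_perm p S l R : Permutation S (l :: R) ->
  cnt p S = ((if p l then 1 else 0) + cnt p R)%nat.
Proof. intros H. assert (E : forall A B, Permutation A B -> cnt p A = cnt p B).
  { intros A B HP; induction HP; unfold cnt in *; simpl; auto.
    - destruct (p x); simpl; auto.
    - destruct (p x); destruct (p y); simpl; auto.
    - lia. }
  rewrite (E _ _ H). unfold cnt; simpl. destruct (p l); simpl; auto. Qed.
Lemma cnt_all p S : (forall y, In y S -> p y = true) -> cnt p S = length S.
Proof. intros H. assert (h1 := cnt_neg p S).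
  assert (h2 : (cnt (fun y => negb (p y)) S <= cnt (fun _ => false) S)%nat).
  { apply cnt_mono. intros y Hy; rewrite (H y Hy); simpl; auto. }
  assert (h3 : cnt (fun _ => false) S = 0%nat).
  { unfold cnt; clear; induction S; simpl; auto. }
  lia. Qed.
Lemma cnt_none p S : (forall y, In y S -> p y = false) -> cnt p S = 0%nat.
Proof. intros H. assert (h2 : (cnt p S <= cnt (fun _ => false) S)%nat).
  { apply cnt_mono. intros y Hy; rewrite (H y Hy); auto. }
  assert (h3 : cnt (fun _ => false) S = 0%nat).
  { unfold cnt; clear; induction S; simpl; auto. }
  lia. Qed.
Lemma cnt_le p S : (cnt p S <= length S)%nat.
Proof. assert (h := cnt_neg p S); lia. Qed.

Lemma pw_le1 S a : pw S -> In a S -> (cnt (Q a) S <= 1)%nat.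
Proof. intros H Ha; specialize (H a Ha); destruct (Rle_dec (a+a) 1); lia. Qed.

Lemma pw_open S x : pw S -> (forall y, In y S -> 1 < y + x) -> pw (S ++ [x]).
Proof. intros H Hx a Ha. rewrite cnt_app. apply in_app_or in Ha; destruct Ha as [Ha|Ha].
  - rewrite (Q_false a x) by (specialize (Hx a Ha); lra). specialize (H a Ha); lia.
  - destruct Ha as [->|[]].
    rewrite (cnt_none (Q a) S) by (intros y Hy; apply Q_false; specialize (Hx y Hy); lra).
    unfold Q at 1; destruct (Rle_dec (a + a) 1); simpl; lia. Qed.

Lemma pw_close S l R : pw S -> Permutation S (l :: R) -> pw R.
Proof. intros H HP a Ha.
  assert (HaS : In a S) by (apply (Permutation_in _ (Permutation_sym HP)); simpl; auto).
  specialize (H a HaS). rewrite (cnt_perm (Q a) S l R HP) in H. lia. Qed.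

Lemma dom_oo S S' x x' : dom S S' -> x <= x' -> dom (S ++ [x]) (S' ++ [x']).
Proof. intros H Hx t s. rewrite !cnt_app. specialize (H t s).
  destruct (ab t s x) eqn:E; [rewrite (ab_up t s x x' E Hx)|]; lia. Qed.

Lemma dom_co S S' R x' l : dom S S' -> Permutation S (l :: R) -> dom R (S' ++ [x']).
Proof. intros H HP t s. rewrite cnt_app. specialize (H t s).
  rewrite (cnt_perm _ S l R HP) in H. destruct (ab t s x'); lia. Qed.

Lemma dom_cc S S' R R' x x' l l' : dom S S' -> Permutation S (l :: R) ->
  Permutation S' (l' :: R') -> l + x <= 1 ->
  (forall y, In y S -> y + x <= 1 -> y <= l) -> l' + x' <= 1 -> x <= x' -> dom R R'.
Proof. intros H HP HP' Hl Hmax Hl' Hx t s.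
  assert (E := cnt_perm (ab t s) S l R HP). assert (E' := cnt_perm (ab t s) S' l' R' HP').
  assert (H0 := H t s).
  assert (InS : In l S) by (apply (Permutation_in _ (Permutation_sym HP)); simpl; auto).
  assert (InS' : In l' S') by (apply (Permutation_in _ (Permutation_sym HP')); simpl; auto).
  destruct (ab t s l') eqn:El'; destruct (ab t s l) eqn:El; try lia.
  set (q := ab (1 - x) true).
  assert (h1 : (cnt (ab t s) S <= cnt q S)%nat).
  { apply cnt_mono. intros y Hy Hp. unfold q; apply ab_gt_true.
    destruct (Rle_dec y (1 - x)) as [h|h]; [|lra].
    assert (y <= l) by (apply Hmax; auto; lra).
    rewrite (ab_up t s y l Hp H1) in El; discriminate. }
  assert (h2 := H (1 - x) true). fold q in h2.
  assert (h3 : (cnt q S' < cnt (ab t s) S')%nat).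
  { apply (cnt_strict _ _ _ l'); auto.
    - intros y Hy Hq. unfold q in Hq. apply (ab_up t s l'); auto.
      unfold ab in Hq; destruct (Rlt_dec (1-x) y); [lra|discriminate].
    - unfold q; apply ab_gt_false; lra. }
  lia. Qed.

Lemma len_oc S S' R' x x' l' : dom S S' -> (forall y, In y S -> 1 < y + x) ->
  l' + x' <= 1 -> x <= x' -> Permutation S' (l' :: R') -> (length S + 1 <= length S')%nat.
Proof. intros H Hx Hl' Hxx HP.
  assert (InS' : In l' S') by (apply (Permutation_in _ (Permutation_sym HP)); simpl; auto).
  assert (h1 : cnt (ab l' true) S = length S).
  { apply cnt_all; intros y Hy; apply ab_gt_true; specialize (Hx y Hy); lra. }
  assert (h2 : (cnt (ab l' true) S' < cnt (fun _ => true) S')%nat).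
  { apply (cnt_strict _ _ _ l'); auto. apply ab_gt_false; lra. }
  assert (h3 : cnt (fun _ => true) S' = length S') by (apply cnt_all; auto).
  specialize (H l' true). lia. Qed.

Lemma dom_oc S S' R' x x' l' : dom S S' -> pw S' -> (forall y, In y S -> 1 < y + x) ->
  l' + x' <= 1 -> x <= x' -> Permutation S' (l' :: R') ->
  (length S + 2 <= length S')%nat -> dom (S ++ [x]) R'.
Proof. intros H Hpw Hx Hl' Hxx HP Hlen t s. rewrite cnt_app.
  assert (E' := cnt_perm (ab t s) S' l' R' HP).
  assert (InS' : In l' S') by (apply (Permutation_in _ (Permutation_sym HP)); simpl; auto).
  assert (Hneg := cnt_neg (ab t s) S'). assert (HlS := cnt_le (ab t s) S).
  assert (Hq1 := pw_le1 S' l' Hpw InS').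
  destruct (ab t s l') eqn:El'.
  - destruct (ab t s x) eqn:Ex.
    + assert (h : cnt (fun y => negb (ab t s y)) S' = 0%nat).
      { destruct (Rle_dec (l' + l') 1) as [hl|hl].
        - assert (h := cnt_strict (fun y => negb (ab t s y)) (Q l') S' l').
          assert (h' : (cnt (fun y => negb (ab t s y)) S' < cnt (Q l') S')%nat).
          { apply h; auto.
            - intros y Hy Hn. apply Q_true. destruct (ab t s y) eqn:Ey; [discriminate|].
              assert (y < x) by (apply (ab_lt t s); auto). lra.
            - apply Q_true; auto.
            - rewrite El'; auto. }
          lia.
        - assert (h : (cnt (fun y => negb (ab t s y)) S' <= cnt (Q l') S')%nat).
          { apply cnt_mono. intros y Hy Hn. apply Q_true. destruct (ab t s y) eqn:Ey; [discriminate|].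
            assert (y < x) by (apply (ab_lt t s); auto). lra. }
          assert (h0 := Hpw l' InS'). destruct (Rle_dec (l' + l') 1); [lra|]. lia. }
      lia.
    + assert (h1 : cnt (ab t s) S = length S).
      { apply cnt_all; intros y Hy; apply (ab_up t s l'); auto. specialize (Hx y Hy); lra. }
      assert (h2 : cnt (ab l' true) S = length S).
      { apply cnt_all; intros y Hy; apply ab_gt_true; specialize (Hx y Hy); lra. }
      assert (h3 : (cnt (ab l' true) S' < cnt (ab t s) S')%nat).
      { apply (cnt_strict _ _ _ l'); auto.
        - intros y Hy Hq. apply (ab_up t s l'); auto.
          unfold ab in Hq; destruct (Rlt_dec l' y); [lra|discriminate].
        - apply ab_gt_false; lra. }
      specialize (H l' true). lia.
  - destruct (ab t s x) eqn:Ex.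
    + assert (h : (cnt (fun y => negb (ab t s y)) S' <= cnt (Q l') S')%nat).
      { apply cnt_mono. intros y Hy Hn. apply Q_true. destruct (ab t s y) eqn:Ey; [discriminate|].
        assert (y < x) by (apply (ab_lt t s); auto). lra. }
      lia.
    + specialize (H t s). lia.
Qed.

Lemma aux_spec : forall L x k acc,
  (best_bin_aux L x k acc = acc /\
    (forall j, (j < length L)%nat -> nth j L 0 + x <= 1 ->
       exists i la, acc = Some (i, la) /\ nth j L 0 <= la))
  \/ (exists j, (j < length L)%nat /\ best_bin_aux L x k acc = Some ((k + j)%nat, nth j L 0)
      /\ nth j L 0 + x <= 1
      /\ (forall j', (j' < length L)%nat -> nth j' L 0 + x <= 1 -> nth j' L 0 <= nth j L 0)
      /\ (forall i la, acc = Some (i, la) -> la <= nth j L 0)).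
Proof.
  induction L as [|l ls IH]; intros x k acc.
  - left. split; [reflexivity|]. intros j Hj; simpl in Hj; lia.
  - simpl.
    assert (UPD : forall acc0, (forall i la, acc0 = Some (i, la) -> la < l) -> l + x <= 1 ->
      (best_bin_aux ls x (S k) (Some (k, l)) = acc0 /\
        (forall j, (j < S (length ls))%nat -> nth j (l :: ls) 0 + x <= 1 ->
          exists i la, acc0 = Some (i, la) /\ nth j (l :: ls) 0 <= la))
      \/ (exists j, (j < S (length ls))%nat /\
          best_bin_aux ls x (S k) (Some (k, l)) = Some ((k + j)%nat, nth j (l :: ls) 0)
          /\ nth j (l :: ls) 0 + x <= 1
          /\ (forall j', (j' < S (length ls))%nat -> nth j' (l :: ls) 0 + x <= 1 ->
                nth j' (l :: ls) 0 <= nth j (l :: ls) 0)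
          /\ (forall i la, acc0 = Some (i, la) -> la <= nth j (l :: ls) 0))).
    { intros acc0 Hacc Hfit. right.
      destruct (IH x (S k) (Some (k, l))) as [[Heq Hall]|[j [Hj [Heq [Hjf [Hmax Hcl]]]]]].
      - exists 0%nat. split; [lia|]. split; [rewrite Heq; do 2 f_equal; lia|].
        split; [simpl; auto|]. split.
        + intros [|j'] Hj' Hf; simpl; [lra|].
          destruct (Hall j' ltac:(simpl in Hj'; lia) Hf) as [i [la [E Hle]]].
          inversion E; subst; auto.
        + intros i la E; simpl; apply Rlt_le; eapply Hacc; eauto.
      - exists (S j). split; [lia|]. split; [rewrite Heq; f_equal; f_equal; lia|].
        simpl. split; auto.
        assert (hl : l <= nth j ls 0) by (eapply Hcl; eauto).
        split.
        + intros [|j'] Hj' Hf; simpl; auto. apply Hmax; auto. simpl in Hj'; lia.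
        + intros i la E. specialize (Hacc i la E). lra. }
    assert (KEEP : forall acc0, (l + x <= 1 -> exists i la, acc0 = Some (i, la) /\ l <= la) ->
      (best_bin_aux ls x (S k) acc0 = acc0 /\
        (forall j, (j < S (length ls))%nat -> nth j (l :: ls) 0 + x <= 1 ->
          exists i la, acc0 = Some (i, la) /\ nth j (l :: ls) 0 <= la))
      \/ (exists j, (j < S (length ls))%nat /\
          best_bin_aux ls x (S k) acc0 = Some ((k + j)%nat, nth j (l :: ls) 0)
          /\ nth j (l :: ls) 0 + x <= 1
          /\ (forall j', (j' < S (length ls))%nat -> nth j' (l :: ls) 0 + x <= 1 ->
                nth j' (l :: ls) 0 <= nth j (l :: ls) 0)
          /\ (forall i la, acc0 = Some (i, la) -> la <= nth j (l :: ls) 0))).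
    { intros acc0 Hl.
      destruct (IH x (S k) acc0) as [[Heq Hall]|[j [Hj [Heq [Hjf [Hmax Hcl]]]]]].
      - left. split; auto. intros [|j'] Hj' Hf; simpl in *; auto.
        apply Hall; auto; lia.
      - right. exists (S j). split; [lia|]. split; [rewrite Heq; f_equal; f_equal; lia|].
        simpl. split; auto. split; auto.
        intros [|j'] Hj' Hf; simpl in *; auto.
        + destruct (Hl Hf) as [i [la [E Hle]]]. specialize (Hcl i la E). lra.
        + apply Hmax; auto; lia. }
    destruct (Rle_dec (l + x) 1) as [Hfit|Hnf].
    + destruct acc as [[i la]|].
      * destruct (Rlt_dec la l) as [Hlt|Hnlt].
        -- apply UPD; auto. intros i0 la0 E; inversion E; subst; auto.
        -- apply KEEP. intros _. exists i, la. split; auto. lra.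
      * apply UPD; auto. intros i0 la0 E; discriminate.
    + apply KEEP. intros h; lra.
Qed.

Lemma best_bin_some L x i : best_bin L x = Some i ->
  (i < length L)%nat /\ nth i L 0 + x <= 1 /\
  (forall j, (j < length L)%nat -> nth j L 0 + x <= 1 -> nth j L 0 <= nth i L 0).
Proof. unfold best_bin. intros H.
  destruct (aux_spec L x 0 None) as [[Heq Hall]|[j [Hj [Heq [Hjf [Hmax Hcl]]]]]];
    rewrite Heq in H; simpl in H; [discriminate|].
  inversion H; subst. auto. Qed.

Lemma best_bin_none L x : best_bin L x = None ->
  forall j, (j < length L)%nat -> 1 < nth j L 0 + x.
Proof. unfold best_bin. intros H j Hj.
  destruct (aux_spec L x 0 None) as [[Heq Hall]|[j0 [Hj0 [Heq [Hjf [Hmax Hcl]]]]]];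
    rewrite Heq in H; simpl in H; [|discriminate].
  destruct (Rle_dec (nth j L 0 + x) 1) as [h|h]; [|lra].
  destruct (Hall j Hj h) as [i [la [E _]]]; discriminate. Qed.

Definition SL (P : list (R * bool)) : list R := map fst (filter snd P).
Fixpoint upd (P : list (R * bool)) (i : nat) (x : R) : list (R * bool) :=
  match P, i with
  | [], _ => []
  | (l, _) :: ps, O => (l + x, false) :: ps
  | p :: ps, S i' => p :: upd ps i' x
  end.
Definition gstep (P : list (R * bool)) (x : R) : list (R * bool) :=
  match best_bin (map fst P) x with
  | Some i => upd P i x
  | None => P ++ [(x, true)]
  end.
Definition flagok (p : R * bool) : Prop := if snd p then 1/3 < fst p else 2/3 < fst p.

Lemma map_upd P i x : map fst (upd P i x) = add_at (map fst P) i x.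
Proof. revert i; induction P as [|[l b] ps IH]; intros [|i]; simpl; auto. f_equal; auto. Qed.

Lemma fold_fst : forall I P, map fst (fold_left gstep I P) = fold_left bf_step I (map fst P).
Proof. induction I as [|x I IH]; intros P; simpl; auto. rewrite IH. f_equal.
  unfold gstep, bf_step. destruct (best_bin (map fst P) x).
  - apply map_upd.
  - rewrite map_app; auto. Qed.

Lemma upd_S P i x l : nth i P (0, false) = (l, true) -> (i < length P)%nat ->
  Permutation (SL P) (l :: SL (upd P i x)).
Proof. revert i; induction P as [|[a b] ps IH]; intros i Hn Hi; simpl in Hi; [lia|].
  destruct i as [|i]; simpl in Hn.
  - inversion Hn; subst. unfold SL; simpl. apply Permutation_refl.
  - simpl. unfold SL in *; simpl. destruct b; simpl.
    + eapply perm_trans. apply perm_skip. apply IH. exact Hn. lia. apply perm_swap.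
    + apply IH. exact Hn. lia. Qed.

Lemma upd_length P i x : length (upd P i x) = length P.
Proof. revert i; induction P as [|[l b] ps IH]; intros [|i]; simpl; auto. Qed.

Lemma upd_forall P i x l : Forall flagok P -> nth i P (0, false) = (l, true) -> 1/3 < x ->
  Forall flagok (upd P i x).
Proof. revert i; induction P as [|[a b] ps IH]; intros i HF Hn Hx; simpl; auto.
  inversion HF; subst. destruct i as [|i]; simpl in Hn.
  - inversion Hn; subst. simpl. constructor; auto. unfold flagok in *; simpl in *. lra.
  - simpl. constructor; eauto. Qed.

Lemma SL_app P x : SL (P ++ [(x, true)]) = SL P ++ [x].
Proof. unfold SL. rewrite filter_app, map_app. auto. Qed.

Lemma SL_in P y : In y (SL P) -> In y (map fst P).
Proof. unfold SL. intros H. apply in_map_iff in H as [[a b] [E H]].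
  apply filter_In in H as [H _]. apply in_map_iff. exists (a, b); auto. Qed.

Lemma SL_pos P y : Forall flagok P -> In y (SL P) -> 1/3 < y.
Proof. unfold SL. intros HF H. apply in_map_iff in H as [[a b] [E H]].
  apply filter_In in H as [H Hb]. rewrite Forall_forall in HF. specialize (HF _ H).
  unfold flagok in HF; simpl in *; subst b; simpl in E; subst; auto. Qed.

Lemma gstep_cases P x : Forall flagok P -> 1/3 < x ->
  ((forall y, In y (SL P) -> 1 < y + x) /\ gstep P x = P ++ [(x, true)])
  \/ (exists l, l + x <= 1 /\ (forall y, In y (SL P) -> y + x <= 1 -> y <= l) /\
      Permutation (SL P) (l :: SL (gstep P x)) /\ length (gstep P x) = length P /\
      Forall flagok (gstep P x)).
Proof. intros HF Hx.
  assert (Hn : forall j, nth j (map fst P) 0 = fst (nth j P (0, false)))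
    by (intro j; exact (map_nth fst P (0, false) j)).
  unfold gstep. destruct (best_bin (map fst P) x) as [n|] eqn:E.
  - right. apply best_bin_some in E as [Hi [Hfit Hmax]]. rewrite length_map in Hi.
    rewrite Hn in Hfit.
    destruct (nth n P (0, false)) as [l b] eqn:Ep.
    assert (Hok : flagok (l, b)) by (rewrite <- Ep; rewrite Forall_forall in HF; apply HF, nth_In; auto).
    destruct b; unfold flagok in Hok; simpl in *; [|lra].
    exists l. split; auto. split.
    + intros y Hy Hf. apply SL_in in Hy. destruct (In_nth _ _ 0 Hy) as [j [Hj Hjy]].
      rewrite length_map in Hj. assert (h := Hmax j ltac:(rewrite length_map; auto)).
      rewrite Hjy, Hn, Ep in h. simpl in h. apply h; auto.
    + split; [apply upd_S; auto|]. split; [apply upd_length|]. eapply upd_forall; eauto.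
  - left. split; auto. intros y Hy. apply SL_in in Hy.
    destruct (In_nth _ _ 0 Hy) as [j [Hj Hjy]]. rewrite <- Hjy.
    apply (best_bin_none _ _ E); auto. Qed.

Definition Inv (P P' : list (R * bool)) : Prop :=
  Forall flagok P /\ Forall flagok P' /\ pw (SL P) /\ pw (SL P') /\ dom (SL P) (SL P') /\
  (2 * length P + length (SL P') = 2 * length P' + length (SL P))%nat.

Lemma step_inv P P' x x' : Inv P P' -> 1/3 < x -> x <= x' -> Inv (gstep P x) (gstep P' x').
Proof. intros [HF [HF' [Hpw [Hpw' [Hdom Hpar]]]]] Hx Hxx.
  assert (Hx' : 1/3 < x') by lra.
  destruct (gstep_cases P x HF Hx) as [[Ho Eo]|[l [Hl [Hmax [HP [Hlen HFn]]]]]];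
  destruct (gstep_cases P' x' HF' Hx') as [[Ho' Eo']|[l' [Hl' [Hmax' [HP' [Hlen' HFn']]]]]].
  - rewrite Eo, Eo'. repeat split.
    + apply Forall_app; split; auto; constructor; auto.
    + apply Forall_app; split; auto; constructor; auto.
    + rewrite SL_app; apply pw_open; auto.
    + rewrite SL_app; apply pw_open; auto.
    + rewrite !SL_app; apply dom_oo; auto.
    + rewrite !SL_app, !length_app; simpl; lia.
  - rewrite Eo.
    assert (h1 := len_oc _ _ _ _ _ _ Hdom Ho Hl' Hxx HP').
    assert (h2 := Permutation_length HP'). simpl in h2.
    repeat split; auto.
    + apply Forall_app; split; auto; constructor; auto.
    + rewrite SL_app; apply pw_open; auto.
    + eapply pw_close; eauto.
    + rewrite SL_app. eapply dom_oc; eauto. lia.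
    + rewrite SL_app, !length_app; simpl; lia.
  - rewrite Eo'.
    assert (h2 := Permutation_length HP). simpl in h2.
    repeat split; auto.
    + apply Forall_app; split; auto; constructor; auto.
    + exact (pw_close _ _ _ Hpw HP).
    + rewrite SL_app; apply pw_open; auto.
    + rewrite SL_app. eapply dom_co; eauto.
    + rewrite SL_app, !length_app; simpl; lia.
  - assert (h2 := Permutation_length HP). simpl in h2.
    assert (h2' := Permutation_length HP'). simpl in h2'.
    repeat split; auto.
    + exact (pw_close _ _ _ Hpw HP).
    + exact (pw_close _ _ _ Hpw' HP').
    + eapply dom_cc; [exact Hdom|exact HP|exact HP'|..]; eauto.
    + lia.
Qed.

Lemma fold_inv : forall I I' P P', length I = length I' ->
  (forall x, In x I -> 1/3 < x) ->
  (forall i, (i < length I)%nat -> nth i I 0 <= nth i I' 0) ->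
  Inv P P' -> Inv (fold_left gstep I P) (fold_left gstep I' P').
Proof. induction I as [|x I IH]; intros [|x' I'] P P' Hl Hx Hle Hinv;
  simpl in Hl; try discriminate; simpl; auto.
  apply IH; auto.
  - intros y Hy; apply Hx; right; auto.
  - intros i Hi; apply (Hle (S i)); simpl; lia.
  - apply step_inv; auto. apply Hx; left; auto. apply (Hle 0%nat); simpl; lia.
Qed.

Theorem proposition7 (I I' : list R) :
  length I = length I' ->
  (forall x, In x I -> 1/3 < x <= 1) ->
  (forall x, In x I' -> 0 < x <= 1) ->
  (forall i, (i < length I)%nat -> nth i I 0 <= nth i I' 0) ->
  (BF I <= BF I')%nat.
Proof.
  intros Hl Hx _ Hle. unfold BF, bf_loads.
  change (@nil R) with (map fst (@nil (R * bool))).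
  rewrite <- !fold_fst, !length_map.
  assert (H : Inv (fold_left gstep I []) (fold_left gstep I' [])).
  { apply fold_inv; auto.
    - intros y Hy; apply Hx; auto.
    - repeat split; try constructor; intros a Ha; destruct Ha. }
  destruct H as [HF [HF' [_ [_ [Hdom Hpar]]]]].
  assert (h := Hdom 0 false).
  rewrite (cnt_all _ (SL (fold_left gstep I []))) in h
    by (intros y Hy; apply ab_ge_true; assert (h0 := SL_pos _ _ HF Hy); lra).
  assert (h' := cnt_le (ab 0 false) (SL (fold_left gstep I' []))).
  lia.
Qed.
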